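(* Let $\eta$ be a denoiser family obeying the scaling relation, $\tau\in\Theta$, and $\nu=\{\nu_N\}$ a sequence such that for every $\sigma>0$ the limit $\lim_{N\to\infty}\frac1N\mathbb E_{\nu_N}\|\mathbf X-\eta(\mathbf X+\sigma\mathbf Z;\tau,\sigma)\|_2^2$ exists. Then $$\delta_{SE}(\tau,\nu\mid\eta)=M(\tau,\nu\mid\eta)$$ (both sides possibly $+\infty$).
   Context: A denoiser family is a collection of maps $\eta(\cdot;\tau,\sigma):\mathbb R^N\to\mathbb R^N$ ($N\ge1$, $\tau\in\Theta$, $\sigma>0$) satisfying the scaling relation $\eta(y;\tau,\sigma)=\sigma\,\eta(y/\sigma;\tau,1)$. For $\nu=\{\nu_N\}$, $\nu_N\in\mathcal P(\mathbb R^N)$, $\delta>0$, $m>0$, the state evolution map is $$\Psi(m;\delta,\tau,\nu)=\lim_{N\to\infty}\frac1N\mathbb E_{\nu_N}\Big\|\mathbf X-\eta\Big(\mathbf X+\sqrt{m/\delta}\,\mathbf Z;\tau,\sqrt{m/\delta}\Big)\Big\|_2^2,$$ with $\mathbf X\sim\nu_N$ independent of $\mathbf Z\sim\mathsf N(0,I_{N\times N})$. The highest fixed point is $\mathrm{HFP}(\delta,\tau,\nu)=\sup\big(\{0\}\cup\{m>0:\Psi(m;\delta,\tau,\nu)\ge m\}\big)$. Define $\delta_{SE}(\tau,\nu\mid\eta)=\inf\{\delta>0:\mathrm{HFP}(\delta,\tau,\nu)=0\}$ (with $\inf\emptyset=+\infty$) and $$M(\tau,\nu\mid\eta)=\sup_{\sigma>0}\lim_{N\to\infty}\frac{1}{N\sigma^2}\mathbb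 E_{\nu_N}\|\mathbf X-\eta(\mathbf X+\sigma\mathbf Z;\tau,\sigma)\|_2^2.$$ *)

(* Defs.v *)
From HB Require Import structures.
From mathcomp Require Import all_boot all_order all_algebra.
From mathcomp Require Import all_classical all_reals all_analysis.
Set Implicit Arguments. Unset Strict Implicit. Unset Printing Implicit Defensive.
Import Order.TTheory GRing.Theory Num.Theory.
Import numFieldNormedType.Exports.
Local Open Scope classical_set_scope.
Local Open Scope ring_scope.

(** R^N is modelled as [N.-tuple R], which carries the library's product
    (coordinate) sigma-algebra, i.e. the Borel sigma-algebra of R^N. *)

Section Defs.
Context {R : realType}.

Definition tadd N (x y : N.-tuple R) : N.-tuple R :=
  [tuple tnth x i + tnth y i | i < N].
Definition tsub N (x y : N.-tuple R) : N.-tuple R :=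
  [tuple tnth x i - tnth y i | i < N].
Definition tscale N (a : R) (x : N.-tuple R) : N.-tuple R :=
  [tuple a * tnth x i | i < N].
Definition sqnorm N (x : N.-tuple R) : R := \sum_(i < N) tnth x i ^+ 2.

(** Expectation E_Z[f Z] for Z ~ N(0, I_{N x N}), computed as the iterated
    integral against N independent standard normal coordinates. *)
Fixpoint gauss_expect (N : nat) : (N.-tuple R -> \bar R) -> \bar R :=
  match N with
  | 0 => fun f => f [tuple]
  | N'.+1 => fun f =>
      (\int[normal_prob (0:R) 1]_z gauss_expect (fun w => f (cons_tuple z w)))%E
  end.

Definition denoiser (Theta : Type) := forall N : nat, Theta -> R -> N.-tuple R -> N.-tuple R.

Definition scaling_relation (Theta : Type) (eta : denoiser Theta) : Prop :=
  forall N tau sigma (y : N.-tuple R), 0 < sigma ->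
    eta N tau sigma y = tscale sigma (eta N tau 1 (tscale sigma^-1 y)).

Definition laws := forall N : nat, probability (N.-tuple R) R.

Section SE.
Context (Theta : Type) (eta : denoiser Theta) (nu : laws) (tau : Theta).

(** E_{nu_N} ||X - eta(X + sigma Z; tau, sigma)||_2^2, X ~ nu_N indep. of
    Z ~ N(0, I_N) (iterated integral, Tonelli). *)
Definition risk (N : nat) (sigma : R) : \bar R :=
  (\int[nu N]_x gauss_expect
      (fun z => (sqnorm (tsub x (eta tau sigma (tadd x (tscale sigma z)))))%:E))%E.

Definition Psi (m delta : R) : \bar R :=
  lim ((fun N : nat => ((N%:R)^-1)%:E * risk N (Num.sqrt (m / delta)))%E @ \oo).

Definition HFP (delta : R) : \bar R :=
  ereal_sup ([set 0%E] `|` [set m%:E | m in [set m : R | 0 < m /\ (m%:E <= Psi m delta)%E]]).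

(** delta_SE(tau, nu | eta) ; ereal_inf of the empty set is +oo *)
Definition delta_SE : \bar R :=
  ereal_inf [set d%:E | d in [set d : R | 0 < d /\ HFP d = 0%E]].

Definition M_SE : \bar R :=
  ereal_sup [set lim ((fun N : nat => ((N%:R * sigma ^+ 2)^-1)%:E * risk N sigma)%E @ \oo)
            | sigma in [set s : R | 0 < s]].
End SE.
End Defs.

(* Main.v *)
Require Import Defs.
From mathcomp Require Import all_boot all_order all_algebra.
From mathcomp Require Import all_classical all_reals all_analysis.
Import Order.TTheory GRing.Theory Num.Theory.
Local Open Scope classical_set_scope.
Local Open Scope ring_scope.

Lemma gauss_expect_ge0 (R : realType) N (f : N.-tuple R -> \bar R) :
  (forall x, (0 <= f x)%E) -> (0 <= @gauss_expect R N f)%E.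
Proof.
elim: N f => [|N IH] f f0 /=; first exact: f0.
apply: integral_ge0 => x _; apply: IH => w; exact: f0.
Qed.

Lemma risk_ge0 (R : realType) (Theta : Type) (eta : @denoiser R Theta)
  (nu : @laws R) (tau : Theta) N s : (0 <= risk eta nu tau N s)%E.
Proof.
apply: integral_ge0 => x _; apply: gauss_expect_ge0 => z.
rewrite lee_fin; apply: sumr_ge0 => i _; exact: sqr_ge0.
Qed.

From mathcomp Require Import lra.

Theorem mainTheorem15 (R : realType) (Theta : Type) (eta : @denoiser R Theta)
  (nu : @laws R) (tau : Theta) :
  scaling_relation eta ->
  (forall sigma : R, 0 < sigma ->
     exists l : R,
       (fun N : nat => ((N%:R)^-1)%:E * risk eta nu tau N sigma)%E
         @ \oo --> l%:E) ->
  delta_SE eta nu tau = M_SE eta nu tau.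
Proof.
move=> _ Hl.
pose F s := lim ((fun N : nat => ((N%:R)^-1)%:E * risk eta nu tau N s)%E @ \oo).
pose Ms s := lim ((fun N : nat => ((N%:R * s ^+ 2)^-1)%:E * risk eta nu tau N s)%E @ \oo).
have HF : forall s, 0 < s -> exists l : R, [/\ F s = l%:E, 0 <= l & Ms s = (l / s ^+ 2)%:E].
  move=> s s0; have [l hl] := Hl s s0; exists l; split.
  - exact: cvg_lim hl.
  - rewrite -lee_fin; apply: (cvge_to_ge hl).
    apply: nearW => N; apply: mule_ge0; last exact: risk_ge0.
    by rewrite lee_fin invr_ge0 ler0n.
  - rewrite /Ms.
    suff H : ((fun N : nat => ((N%:R * s ^+ 2)^-1)%:E * risk eta nu tau N s)%E @ \oo
      --> (l / s ^+ 2)%:E) by exact: cvg_lim H.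
    suff -> : (fun N : nat => ((N%:R * s ^+ 2)^-1)%:E * risk eta nu tau N s)%E =
      (fun N : nat => ((s ^+ 2)^-1)%:E * (((N%:R)^-1)%:E * risk eta nu tau N s))%E.
      by rewrite mulrC EFinM; exact: cvgeZl.
    apply: funext => N; rewrite invfM EFinM muleA; congr (_ * _)%E; exact: muleC.
have hub : forall s, 0 < s -> (Ms s <= M_SE eta nu tau)%E.
  by move=> s s0; apply: ereal_sup_ubound; exists s.
have M0 : (0 <= M_SE eta nu tau)%E.
  apply: le_trans (hub 1 ltr01); have [l [_ l0 ->]] := HF 1 ltr01.
  by rewrite lee_fin divr_ge0 // sqr_ge0.
apply/eqP; rewrite eq_le; apply/andP; split; last first.
  apply: le_ereal_inf_tmp => _ [d [d0 Hd] <-].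
  apply: ge_ereal_sup => _ [s s0 <-].
  have [l [Fs l0 Hm]] := HF s s0; rewrite -/(Ms s) Hm.
  rewrite lee_fin leNgt; apply/negP => hlt.
  have s20 : 0 < s ^+ 2 by rewrite exprn_gt0.
  have m0 : 0 < d * s ^+ 2 by rewrite mulr_gt0.
  have : ((d * s ^+ 2)%:E <= HFP eta nu tau d)%E.
    apply: ereal_sup_ubound; right; exists (d * s ^+ 2) => //; split => //.
    have hsq : Num.sqrt (d * s ^+ 2 / d) = s.
      rewrite mulrC mulKf ?gt_eqF //.
      by rewrite sqrtr_sqr ger0_norm // ltW.
    have -> : Psi eta nu tau (d * s ^+ 2) d = F s by rewrite /Psi hsq.
    rewrite Fs lee_fin -ler_pdivlMr //; exact: ltW.
  by rewrite Hd lee_fin leNgt m0.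
case E: (M_SE eta nu tau) hub M0 => [r| |] hub M0; last by [].
  2: by rewrite leey.
apply/lee_addgt0Pr => e e0.
apply: ereal_inf_lbound; exists (r + e) => //.
have d0 : 0 < r + e by rewrite lee_fin in M0; lra.
split => //.
apply/eqP; rewrite eq_le; apply/andP; split; last first.
  by apply: ereal_sup_ubound; left.
apply: ge_ereal_sup => _ [->|[m [m0 hm] <-]] //.
exfalso.
set s := Num.sqrt (m / (r + e)).
have md0 : 0 < m / (r + e) by rewrite divr_gt0.
have s0 : 0 < s by rewrite sqrtr_gt0.
have [l [Fs l0 Ms_eq]] := HF s s0.
have hs2 : s ^+ 2 = m / (r + e) by rewrite sqr_sqrtr // ltW.
have s20 : 0 < s ^+ 2 by rewrite exprn_gt0.
have hle := hub s s0; rewrite Ms_eq lee_fin ler_pdivrMr // in hle.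
have hm' : m <= l by move: hm; rewrite /Psi -/s -/(F s) Fs lee_fin.
have hds : (r + e) * s ^+ 2 = m by rewrite hs2 mulrC mulfVK ?gt_eqF.
have es : 0 < e * s ^+ 2 by rewrite mulr_gt0.
have h1 : r * s ^+ 2 < m by rewrite -hds mulrDl ltrDl.
by have := lt_le_trans (le_lt_trans hle h1) hm'; rewrite ltxx.
Qed.
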